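(* Let $t$ and $i$ be integers with $t \geq 1$ and $0 \leq i < t$, and suppose there exists a Hadamard matrix of order $4t+4i$. Then there exists a binary code (not necessarily linear) $C \subseteq \{0,1\}^{4t}$ of length $4t$ with exactly $8t+8i$ codewords and minimum distance at least $2t-2i$, i.e. any two distinct codewords of $C$ are at Hamming distance at least $2t-2i$.
   Context: A Hadamard matrix of order $n$ is an $n \times n$ matrix $H$ with entries in $\{\pm 1\}$ satisfying $HH^{\top} = nI_n$. A binary code of length $m$ is a subset of $\{0,1\}^m$; its minimum distance is the minimum Hamming distance between two distinct codewords. *)

(* Defs.v *)
From mathcomp Require Import all_boot all_order all_algebra.
Set Implicit Arguments. Unset Strict Implicit. Unset Printing Implicit Defensive.
Import GRing.Theory Num.Theory.

Definition is_hadamard (n : nat) (H : 'M[int]_n) : Prop :=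
  (forall i j, H i j = 1%R \/ H i j = (-1)%R) /\ (H *m H^T = (n%:R)%:M)%R.

Definition word (m : nat) := m.-tuple bool.

Definition hamming (m : nat) (x y : word m) : nat :=
  #|[set i : 'I_m | tnth x i != tnth y i]|.

Definition min_dist_ge (m : nat) (C : {set word m}) (d : nat) : Prop :=
  forall x y, x \in C -> y \in C -> x != y -> d <= hamming x y.

(* Main.v *)
Require Import Defs.
From mathcomp Require Import all_boot all_order all_algebra zify.
Import GRing.Theory Num.Theory.
Local Open Scope ring_scope.
Set Implicit Arguments. Unset Strict Implicit.

Definition bitf (x : int) (b : bool) : bool := (x == 1) (+) b.
Definition sgb (b : bool) : int := if b then -1 else 1.

Lemma prod_sign (x y : int) b c : (x = 1 \/ x = -1) -> (y = 1 \/ y = -1) ->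
  x * y * (sgb b * sgb c) = if bitf x b != bitf y c then -1 else 1.
Proof. by case=> ->; case=> ->; case: b; case: c. Qed.

Lemma sum_sign n (S : {set 'I_n}) :
  \sum_(k < n) (if k \in S then (-1 : int) else 1) = (n%:Z - 2 * #|S|%:Z).
Proof.
rewrite (bigID (mem S)) /=.
rewrite (eq_bigr (fun _ => -1)); last by move=> k ->.
rewrite [X in _ + X](eq_bigr (fun _ => 1)); last by move=> k /negbTE ->.
rewrite !sumr_const.
have -> : #|[pred k : 'I_n | ~~ (k \in S)]| = #|~: S|.
  by apply: eq_card => k; rewrite !inE.
have -> : #|[pred k : 'I_n | k \in S]| = #|S| by apply: eq_card.
have hC := cardsC S; rewrite card_ord in hC.
rewrite mulNrn. lia.
Qed.

Definition dset n (H : 'M[int]_n) r b s c : {set 'I_n} :=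
  [set k | bitf (H r k) b != bitf (H s k) c].

Lemma had_dist n (H : 'M[int]_n) r s b c : is_hadamard H -> (r, b) != (s, c) ->
  (n <= 2 * #|dset H r b s c|)%N.
Proof.
move=> [Hpm HH] Hne.
set S := dset H r b s c.
have E : \sum_(k < n) H r k * H s k * (sgb b * sgb c) = n%:Z - 2 * #|S|%:Z.
  rewrite -sum_sign; apply: eq_bigr => k _.
  by rewrite prod_sign // /S /dset inE.
have E2 : \sum_(k < n) H r k * H s k = (n%:R : int) *+ (r == s).
  have := congr1 (fun M : 'M[int]_n => M r s) HH.
  rewrite !mxE => <-; apply: eq_bigr => k _; by rewrite mxE.
rewrite -mulr_suml E2 in E.
move: E Hne; clearbody S; move: #|S| => m.
case: eqP => [<- | _].
  case: b; case: c => E; rewrite ?eqxx //= => _; rewrite /sgb /= mulr1n natz in E; lia.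
rewrite mulr0n mul0r => E _; lia.
Qed.

Definition cw (t i : nat) (H : 'M[int]_(4*t+4*i)) (p : 'I_(4*t+4*i) * bool)
  : word (4*t) := [tuple bitf (H p.1 (lshift (4*i) j)) p.2 | j < 4*t].

Lemma trunc_bound t i (H : 'M[int]_(4*t+4*i)) p q :
  (#|dset H p.1 p.2 q.1 q.2| <=
   hamming (cw H p) (cw H q) + 4 * i)%N.
Proof.
set T := [set j : 'I_(4*t) | tnth (cw H p) j != tnth (cw H q) j].
set U := lshift (4*i) @: T :|: @rshift (4*t) (4*i) @: [set: 'I_(4*i)].
have h1 : (#|dset H p.1 p.2 q.1 q.2| <= #|U|)%N.
  apply: subset_leq_card; apply/subsetP => k; rewrite inE => hk.
  case: (splitP k) => [j ej | j ej]; rewrite inE; apply/orP.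
    have ek : k = lshift (4*i) j by apply: ord_inj.
    left; apply/imsetP; exists j => //.
    by rewrite inE !tnth_mktuple -ek.
  have ek : k = @rshift (4*t) (4*i) j by apply: ord_inj.
  right; apply/imsetP; exists j => //.
have h2 : (#|U| <= #|T| + 4 * i)%N.
  apply: leq_trans (leq_card_setU _ _) _.
  apply: leq_add; first exact: leq_imset_card.
  by apply: leq_trans (leq_imset_card _ _) _; rewrite cardsT card_ord.
exact: leq_trans h1 h2.
Qed.

Lemma cw_dist t i (H : 'M[int]_(4*t+4*i)) p q : is_hadamard H -> p != q ->
  (2 * t - 2 * i <= hamming (cw H p) (cw H q))%N.
Proof.
move=> hH hpq.
have h2 := trunc_bound H p q.
case: p q hpq h2 => [r b] [s c] /= hpq h2.
move: (had_dist hH hpq) h2.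
move: #|dset _ _ _ _ _| => X. move: (hamming _ _) => Y. lia.
Qed.

Local Close Scope ring_scope.
Theorem theorem2 (t i : nat) (ht : 1 <= t) (hi : i < t) :
  (exists H : 'M[int]_(4 * t + 4 * i), is_hadamard H) ->
  exists C : {set word (4 * t)},
    #|C| = 8 * t + 8 * i /\ min_dist_ge C (2 * t - 2 * i).
Proof.
case=> H hH.
have inj : injective (cw H).
  move=> p q e; apply/eqP; apply/negPn/negP => hpq.
  have := cw_dist hH hpq; rewrite e.
  have -> : hamming (cw H q) (cw H q) = 0%N.
    apply/eqP; rewrite cards_eq0; apply/eqP/setP => j; by rewrite !inE eqxx.
  move: hi; lia.
exists (cw H @: [set: _]); split.
  rewrite card_imset // cardsT card_prod card_ord card_bool. lia.
move=> x y /imsetP [p _ ->] /imsetP [q _ ->] hxy.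
apply: cw_dist hH _.
by apply: contraNneq hxy => ->.
Qed.
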